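(* Let $N\geq 2$, $\kappa=0$, and let $\mu_L>0>\mu_R$ be fixed (independent of $\beta$). Let $\rho_\beta$ be the unique stationary distribution of the boundary driven exclusion process on $\{0,1\}^N$ at inverse temperature $\beta$. Then for $x\in\{0,1\}^N$, $$\rho_\beta(x)\asymp 1 \quad\text{if and only if}\quad x(1)=1 \text{ and } x(N)=0.$$
   Context: Configurations are $x\in\{0,1\}^N$; $x(i)=1$ means site $i$ is occupied. For $i\neq j$, $x^{i,j}$ is $x$ with occupations of sites $i,j$ exchanged; for $i\in\{1,N\}$, $x^i$ is $x$ with the occupation of site $i$ flipped. The boundary driven exclusion process (the boundary driven Kawasaki process with zero coupling) is the continuous-time Markov jump process whose only transitions are: for $|i-j|=1$ with $x(i)\neq x(j)$, $x\to x^{i,j}$ at rate $1$; and for $i\in\{1,N\}$, $x\to x^i$ at rate $\exp[\tfrac{\beta\mu_i}{2}(1-2x(i))]$, with $\mu_1=\mu_L$, $\mu_N=\mu_R$. It has a unique stationary distribution $\rho_\beta$. Notation: $f(\beta)\asymp 1$ means $\lim_{\beta\to\infty}\frac1\beta\log f(\beta)=0$. *)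

(* Defs.v *)
From HB Require Import structures.
From mathcomp Require Import all_boot all_order all_algebra.
From mathcomp Require Import all_classical all_reals all_analysis.
Set Implicit Arguments. Unset Strict Implicit. Unset Printing Implicit Defensive.
Import Order.TTheory GRing.Theory Num.Theory.
Import numFieldNormedType.Exports.
Local Open Scope classical_set_scope.
Local Open Scope ring_scope.

(* Configurations x in {0,1}^N: sites 1..N of the paper are indices 0..N-1. *)
Definition config (N : nat) := {ffun 'I_N -> bool}.

Definition occ N (x : config N) (i : nat) : bool :=
  if (insub i : option 'I_N) is Some k then x k else false.

Definition swap N (x : config N) (i j : nat) : config N :=
  [ffun k : 'I_N => if val k == i then occ x j
                    else if val k == j then occ x i else x k].

Definition flip N (x : config N) (i : nat) : config N :=
  [ffun k : 'I_N => if val k == i then ~~ x k else x k].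

Definition rate (R : realType) N (muL muR beta : R) (x y : config N) : R :=
  \sum_(i < N.-1)
     (if (occ x i != occ x i.+1) && (y == swap x i i.+1) then 1 else 0)
  + (if y == flip x 0 then expR (beta * muL / 2 * (1 - 2 * (occ x 0)%:R)) else 0)
  + (if y == flip x N.-1
     then expR (beta * muR / 2 * (1 - 2 * (occ x N.-1)%:R)) else 0).

Definition stationary (R : realType) N (muL muR beta : R) (rho : config N -> R) : Prop :=
  [/\ forall x, 0 <= rho x,
      \sum_x rho x = 1 &
      forall y, \sum_(x | x != y) rho x * rate muL muR beta x y
                = rho y * \sum_(z | z != y) rate muL muR beta y z].

(* f(beta) ≍ 1 :  lim_{beta -> oo} (1/beta) log f(beta) = 0 *)
Definition asymp1 (R : realType) (f : R -> R) : Prop :=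
  (ln (f b) / b) @[b --> +oo] --> (0 : R).

(* Main.v *)
Require Import Defs.
From HB Require Import structures.
From mathcomp Require Import all_boot all_order all_algebra.
From mathcomp Require Import all_classical all_reals all_analysis.
From Stdlib Require Import Lia.
From mathcomp Require Import zify ring lra.
Import Order.TTheory GRing.Theory Num.Theory.
Local Open Scope ring_scope.

Section Comb.
Variable n : nat.
Local Notation N := n.+2.
Implicit Types x y z w : config N.

Lemma occ_lt x {j} (hj : (j < N)%N) : occ x j = x (Ordinal hj).
Proof.
rewrite /occ; case: insubP => [k _ ek|]; last by rewrite hj.
by congr (x _); apply: val_inj.
Qed.

Lemma occ_out x j : (N <= j)%N -> occ x j = false.
Proof.
move=> hj; rewrite /occ; case: insubP => [k hk _|//].
by move: hk; rewrite ltnNge hj.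
Qed.

Lemma config_eq x y : (forall i, (i < N)%N -> occ x i = occ y i) -> x = y.
Proof.
move=> H; apply/ffunP => k; have := H _ (ltn_ord k).
rewrite !(occ_lt _ (ltn_ord k)) /=.
by have -> : Ordinal (ltn_ord k) = k by apply: val_inj.
Qed.

Lemma occ_flip x i j : (i < N)%N ->
  occ (flip x i) j = if j == i then ~~ occ x j else occ x j.
Proof.
move=> hi; case: (ltnP j N) => hj.
  by rewrite !(occ_lt _ hj) ffunE.
rewrite !occ_out //.
have /negPf -> : j != i by apply/eqP => E; move: hj; rewrite E leqNgt hi.
by [].
Qed.

Lemma occ_swap x i j k : (i < N)%N -> (j < N)%N ->
  occ (swap x i j) k = if k == i then occ x j else if k == j then occ x i else occ x k.
Proof.
move=> hi hj; case: (ltnP k N) => hk.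
  by rewrite !(occ_lt _ hk) ffunE /= -!(occ_lt _ hk).
rewrite occ_out //.
have /negPf -> : k != i by apply/eqP; lia.
have /negPf -> : k != j by apply/eqP; lia.
by rewrite occ_out.
Qed.

Definition inA x := occ x 0 && ~~ occ x n.+1.

Definition move x y : Prop :=
  inA x /\
  [\/ exists2 i, (0 < i)%N && (i.+1 < n.+1)%N & y = swap x i i.+1,
      [/\ occ x 1 = false, (1 < n.+1)%N & y = flip (swap x 0 1) 0] |
      [/\ occ x n = true, (0 < n)%N & y = flip (swap x n n.+1) n.+1]].

Inductive reach : config N -> config N -> Prop :=
| reach0 x : reach x x
| reachS x y z : move x y -> reach y z -> reach x z.

Lemma reach_trans x y z : reach x y -> reach y z -> reach x z.
Proof. by elim=> // a b c mab _ IH /IH; apply: reachS. Qed.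

Lemma occ_swap_o x i j k : (i < N)%N -> (j < N)%N -> k != i -> k != j ->
  occ (swap x i j) k = occ x k.
Proof. by move=> hi hj /negPf ki /negPf kj; rewrite occ_swap // ki kj. Qed.

Lemma occ_flip_o x i k : (i < N)%N -> k != i -> occ (flip x i) k = occ x k.
Proof. by move=> hi /negPf ki; rewrite occ_flip // ki. Qed.

Lemma occ_flip_s x i : (i < N)%N -> occ (flip x i) i = ~~ occ x i.
Proof. by move=> hi; rewrite occ_flip // eqxx. Qed.

Lemma move_inA x y : move x y -> inA y.
Proof.
case=> hx [[i /andP[i0 iN] ->]| [h1 h2 ->] | [h1 h2 ->]]; move: hx; rewrite /inA.
- by rewrite !occ_swap_o //; apply/eqP; lia.
- rewrite !occ_flip // !occ_swap //=.
  have -> : (n.+1 == 1)%N = false by apply/eqP; lia.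
  by rewrite h1 => /andP[].
- rewrite !occ_flip // !occ_swap //= eqxx /=.
  have -> : (0 == n)%N = false by apply/eqP; lia.
  have -> : (n.+1 == n)%N = false by apply/eqP; lia.
  by rewrite h1 andbT => /andP[].
Qed.

Lemma reach_swap x i : inA x -> (0 < i)%N -> (i.+1 < n.+1)%N -> reach x (swap x i i.+1).
Proof.
move=> hx h1 h2; apply: reachS (reach0 _); split => //; apply: Or31.
by exists i => //; rewrite h1 h2.
Qed.


Lemma reach_inA x y : reach x y -> inA x -> inA y.
Proof. by elim=> // a b c /move_inA hb _ IH _; apply: IH. Qed.
Arguments reach_inA {x y}.
Arguments reach_trans {x y z}.
Arguments reach_swap {x i}.

Lemma flipK x i : (i < N)%N -> flip (flip x i) i = x.
Proof.
move=> hi; apply: config_eq => k hk; rewrite !occ_flip //.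
by case: eqP => // ->; rewrite negbK.
Qed.

Definition zstar : config N := [ffun k : 'I_N => val k == 0%N].

Lemma occ_zstar i : occ zstar i = (i == 0%N).
Proof.
case: (ltnP i N) => hi; first by rewrite (occ_lt _ hi) ffunE.
by rewrite occ_out //; case: i hi.
Qed.

Lemma zstar_eq x : inA x -> (forall i, (0 < i)%N -> (i <= n)%N -> occ x i = false) ->
  x = zstar.
Proof.
move=> /andP[h0 hN] H; apply: config_eq => i hi; rewrite occ_zstar.
case: i hi => [|i] hi; first by rewrite h0.
case: (ltnP i n) => hin; first by rewrite H.
have -> : i.+1 = n.+1 by lia.
by rewrite (negPf hN); case: eqP.
Qed.

Arguments zstar_eq {x}.

Lemma reach_eject d : forall x p, inA x -> (0 < p)%N -> (p <= n)%N -> (n - p)%N = d ->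
  occ x p = true -> (forall i, (p < i)%N -> (i <= n)%N -> occ x i = false) ->
  reach x (flip x p).
Proof.
elim: d => [|d IH] x p hx p0 pn hd hp hz.
  have ep : p = n by lia.
  subst p.
  apply: reachS (reach0 _); split => //; apply: Or33; split => //.
  apply: config_eq => k hk; rewrite !occ_flip // ?occ_swap //.
  have nn : (n.+1 == n) = false by apply/eqP; lia.
  move: hx => /andP[_ /negPf hN].
  case: (eqVneq k n.+1) => [->|kn]; first by rewrite nn hp hN.
  case: (eqVneq k n) => [->|kn'] //.
  by rewrite hp hN.
have hpn : (p < n)%N by lia.
have hp1 : occ x p.+1 = false by apply: hz.
set x' := swap x p p.+1.
have r1 : reach x x' by apply: reach_swap.
have hx' : inA x' := reach_inA r1 hx.
have -> : flip x p = flip x' p.+1.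
  have hpN : (p < N)%N by lia.
  have hp1N : (p.+1 < N)%N by lia.
  have pp : (p == p.+1) = false by apply/eqP; lia.
  apply: config_eq => k hk; rewrite /x' !occ_flip // ?occ_swap //.
  case: (eqVneq k p) => [->|kp]; first by rewrite pp hp1 hp.
  case: (eqVneq k p.+1) => [->|kp1] //.
  by rewrite hp.
apply: (reach_trans r1); apply: (IH _ p.+1) => //; first lia.
- rewrite /x' occ_swap; try lia.
  have -> : (p.+1 == p) = false by apply/eqP; lia.
  by rewrite eqxx.
- move=> i hi hin; rewrite /x' occ_swap; try lia.
  have /negPf -> : i != p by apply/eqP; lia.
  have /negPf -> : i != p.+1 by apply/eqP; lia.
  by apply: hz => //; lia.
Qed.

Lemma reach_to_zstar x : inA x -> reach x zstar.
Proof.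
suff H : forall m x, inA x -> (forall i, (m < i)%N -> (i <= n)%N -> occ x i = false) ->
  reach x zstar.
  by move=> hx; apply: (H n) => // i; lia.
elim=> [|m IH] {}x hx hz.
  rewrite (zstar_eq hx); first exact: reach0.
  by move=> i i0; apply: hz.
case: (ltnP n m.+1) => hm.
  by apply: IH => // i hi hin; apply: hz => //; lia.
case hxm : (occ x m.+1).
  have r1 : reach x (flip x m.+1) by apply: (reach_eject (n - m.+1)%N).
  apply: (reach_trans r1); apply: IH; first by apply: (reach_inA r1).
  move=> i hi hin; rewrite occ_flip; last lia.
  case: (eqVneq i m.+1) => [->|ne]; first by rewrite hxm.
  by apply: hz => //; lia.
apply: IH => // i hi hin; case: (eqVneq i m.+1) => [->//|ne].
by apply: hz => //; lia.
Qed.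

Lemma reach_inject p : (0 < p)%N -> (p <= n)%N -> forall w, inA w ->
  (forall i, (0 < i)%N -> (i <= p)%N -> occ w i = false) -> reach w (flip w p).
Proof.
elim: p => [//|p IH] _ hpn w hw hz.
case: (posnP p) => [p0|p0].
  subst p.
  apply: reachS (reach0 _); split => //; apply: Or32; split; [by apply: hz | lia |].
  apply: config_eq => k hk; rewrite !occ_flip //; try lia.
  rewrite !occ_swap //; try lia.
  move: hw => /andP[h0 _]; have h1 := hz 1%N isT isT.
  case: (eqVneq k 0%N) => [->|k0] /=; first by rewrite h0 h1.
  by case: (eqVneq k 1%N) => [->|k1] /=; rewrite ?h0 ?h1.
have r1 : reach w (flip w p) by apply: IH => // [|i i0 ip]; [lia | apply: hz => //; lia].
have hw' := reach_inA r1 hw.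
have r2 := reach_swap hw' p0 (ltac:(lia) : (p.+1 < n.+1)%N).
apply: (reach_trans r1); congr (reach _ _): r2.
have pp : (p == p.+1) = false by apply/eqP; lia.
have hp1 : occ w p.+1 = false by apply: hz.
have hp : occ w p = false by apply: hz; lia.
apply: config_eq => k hk; rewrite occ_swap; try lia.
rewrite !occ_flip; try lia.
have pp' : (p.+1 == p) = false by apply/eqP; lia.
case: (eqVneq k p) => [->|kp]; first by rewrite pp pp' hp hp1.
case: (eqVneq k p.+1) => [->|kp1] //.
by rewrite eqxx hp hp1.
Qed.

Lemma reach_from_zstar y : inA y -> reach zstar y.
Proof.
suff H : forall k y, inA y -> (forall i, (0 < i)%N -> (i + k <= n)%N -> occ y i = false) ->
  reach zstar y.
  by move=> hy; apply: (H n) => // i; lia.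
elim=> [|k IH] {}y hy hz.
  rewrite -(zstar_eq hy); first exact: reach0.
  by move=> i i0 ii; apply: hz => //; lia.
case: (posnP (n - k)%N) => hp.
  by apply: IH => // i i0 ii; lia.
case hyp : (occ y (n - k)%N); last first.
  apply: IH => // i i0 ii; case: (eqVneq i (n - k)%N) => [->//|ne].
  by apply: hz => //; lia.
have hnk : ((n - k) < N)%N by lia.
set y' := flip y (n - k).
have hy' : inA y'.
  move: hy; rewrite /inA /y' occ_flip_o //; last (apply/eqP; lia).
  by rewrite occ_flip_o //; apply/eqP; lia.
have hz' : forall i, (0 < i)%N -> (i <= n - k)%N -> occ y' i = false.
  move=> i i0 ii; rewrite /y' occ_flip //.
  case: (eqVneq i (n - k)%N) => [->|ne]; first by rewrite hyp.
  by apply: hz => //; lia.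
have r1 : reach zstar y' by apply: IH => // i i0 ii; apply: hz' => //; lia.
have r2 : reach y' (flip y' (n - k)) by apply: reach_inject => //; lia.
by move: r2; rewrite /y' flipK // => /(reach_trans r1).
Qed.

End Comb.

Arguments inA {n}.
Arguments move {n}.
Arguments reach {n}.
Arguments zstar {n}.
Arguments move_inA {n x y}.
Arguments reach_to_zstar {n x}.
Arguments reach_from_zstar {n y}.
Arguments reach_inA {n x y}.
Arguments reach_trans {n x y z}.
Arguments zstar_eq {n x}.

Section Anal.
Variables (R : realType) (n : nat) (muL muR : R).
Hypotheses (hL : 0 < muL) (hR : muR < 0).
Local Notation N := n.+2.
Implicit Types x y z w : config N.

Definition e0 (beta : R) x := expR (beta * muL / 2 * (1 - 2 * (occ x 0)%:R)).
Definition eN (beta : R) x := expR (beta * muR / 2 * (1 - 2 * (occ x n.+1)%:R)).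
Definition bterm x y (i : nat) : R :=
  if (occ x i != occ x i.+1) && (y == swap x i i.+1) then 1 else 0.

Lemma rateE beta x y : rate muL muR beta x y =
  \sum_(i < n.+1) bterm x y i + (if y == flip x 0 then e0 beta x else 0)
  + (if y == flip x n.+1 then eN beta x else 0).
Proof. by []. Qed.

Lemma bterm_ge0 x y i : 0 <= bterm x y i.
Proof. by rewrite /bterm; case: ifP. Qed.

Lemma bulk_ge0 x y : 0 <= \sum_(i < n.+1) bterm x y i.
Proof. by apply: sumr_ge0 => i _; apply: bterm_ge0. Qed.

Lemma ite_ge0 (b : bool) {v : R} : 0 <= v -> 0 <= if b then v else 0.
Proof. by case: b. Qed.

Lemma rate_ge0 beta x y : 0 <= rate muL muR beta x y.
Proof.
rewrite rateE; apply: addr_ge0; [apply: addr_ge0|]; rewrite ?bulk_ge0 //;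
by apply: ite_ge0; apply: expR_ge0.
Qed.

Lemma flip_neq x i : (i < N)%N -> (x == flip x i) = false.
Proof.
move=> hi; apply/eqP => E; have := congr1 (fun u => occ u i) E.
by rewrite /= occ_flip_s //; case: (occ x i).
Qed.

Lemma rate_self beta x : rate muL muR beta x x = 0.
Proof.
rewrite rateE !flip_neq // big1 ?add0r ?addr0 // => i _; rewrite /bterm.
case: ifP => // /andP[ne /eqP E]; have := congr1 (fun u => occ u i) E.
have hi := ltn_ord i.
rewrite /= occ_swap; try lia.
rewrite eqxx => E'; move: ne; rewrite {1}E' eqxx //.
Qed.

Lemma rate_flip0 beta x : e0 beta x <= rate muL muR beta x (flip x 0).
Proof.
rewrite rateE eqxx; have := bulk_ge0 x (flip x 0).
have := ite_ge0 (flip x 0 == flip x n.+1) (expR_ge0 (beta * muR / 2 * (1 - 2 * (occ x n.+1)%:R))).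
rewrite /eN; lra.
Qed.

Lemma rate_flipN beta x : eN beta x <= rate muL muR beta x (flip x n.+1).
Proof.
rewrite rateE eqxx; have := bulk_ge0 x (flip x n.+1).
have := ite_ge0 (flip x n.+1 == flip x 0) (expR_ge0 (beta * muL / 2 * (1 - 2 * (occ x 0)%:R))).
rewrite /e0; lra.
Qed.

Lemma bterm_le_bulk x y i : (i < n.+1)%N -> bterm x y i <= \sum_(j < n.+1) bterm x y j.
Proof.
move=> hi; rewrite (bigD1 (Ordinal hi)) //= lerDl.
by apply: sumr_ge0 => j _; apply: bterm_ge0.
Qed.

Lemma rate_swap beta x i : (i < n.+1)%N -> occ x i != occ x i.+1 ->
  1 <= rate muL muR beta x (swap x i i.+1).
Proof.
move=> hi hne.
have h1 : 1 <= bterm x (swap x i i.+1) i by rewrite /bterm hne eqxx.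
apply: le_trans h1 _; apply: le_trans (bterm_le_bulk x _ i hi) _.
rewrite rateE -addrA lerDl; apply: addr_ge0; apply: ite_ge0; apply: expR_ge0.
Qed.

Lemma sum_ind (t : config N) (v : R) : \sum_z (if z == t then v else 0) = v.
Proof. by rewrite -big_mkcond big_pred1_eq. Qed.

Lemma sum_rate beta y :
  \sum_(z | z != y) rate muL muR beta y z <= n.+1%:R + e0 beta y + eN beta y.
Proof.
apply: le_trans (_ : \sum_z rate muL muR beta y z <= _).
  rewrite [X in _ <= X](bigD1 y) //= lerDr; apply: rate_ge0.
under eq_bigr do rewrite rateE.
rewrite !big_split /= !sum_ind !lerD2r; rewrite exchange_big /=.
apply: le_trans (_ : \sum_(i < n.+1) (1 : R) <= _); last first.
  by rewrite sumr_const card_ord.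
apply: ler_sum => i _.
apply: le_trans (_ : \sum_z (if z == swap y i i.+1 then (1:R) else 0) <= _).
  by apply: ler_sum => z _; rewrite /bterm; case: (_ != _); case: (_ == _).
by rewrite sum_ind.
Qed.


Section Stat.
Variables (beta : R) (rho : config N -> R).
Hypothesis hs : stationary muL muR beta rho.
Hypothesis hb : 0 <= beta.

Local Notation r := (rate muL muR beta).

Lemma rho_ge0 x : 0 <= rho x.
Proof. by case: hs. Qed.

Lemma rho_le1 x : rho x <= 1.
Proof.
case: hs => h0 h1 _; rewrite -h1 (bigD1 x) //= lerDl.
by apply: sumr_ge0 => z _; apply: h0.
Qed.

Lemma inflow x y : x != y -> rho x * r x y <= rho y * \sum_(z | z != y) r y z.
Proof.
case: hs => h0 _ hbal xy; rewrite -hbal (bigD1 x) //= lerDl.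
by apply: sumr_ge0 => z _; apply: mulr_ge0 => //; apply: rate_ge0.
Qed.

Arguments inflow {x y}.

Lemma inflowB x y B : x != y -> \sum_(z | z != y) r y z <= B ->
  rho x * r x y <= rho y * B.
Proof.
move=> xy hB; apply: le_trans (inflow xy) _; apply: ler_wpM2l => //.
exact: rho_ge0.
Qed.
Arguments inflowB {x y B}.

Let a := expR (beta * muL / 2).
Let b := expR (- (beta * muR / 2)).
Let K : R := n.+1%:R + 2.

Lemma bL : 0 <= beta * muL.
Proof. by apply: mulr_ge0 => //; exact: ltW. Qed.
Lemma bR : beta * muR <= 0.
Proof. by apply: mulr_ge0_le0 => //; exact: ltW. Qed.

Lemma a_ge1 : 1 <= a.
Proof. apply: le_trans _ (expR_ge1Dx _); rewrite lerDl; have := bL; lra. Qed.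
Lemma b_ge1 : 1 <= b.
Proof. apply: le_trans _ (expR_ge1Dx _); rewrite lerDl; have := bR; lra. Qed.
Lemma K_ge1 : 1 <= K.
Proof. by have := ler0n R n.+1; rewrite /K; lra. Qed.

Lemma e0_true x : occ x 0 = true -> e0 beta x <= 1.
Proof. move=> h; rewrite /e0 h expR_le1 /=; have := bL; lra. Qed.
Lemma e0_false x : occ x 0 = false -> e0 beta x = a.
Proof. by move=> h; rewrite /e0 h; congr expR; rewrite /=; ring. Qed.
Lemma eN_false x : occ x n.+1 = false -> eN beta x <= 1.
Proof. move=> h; rewrite /eN h expR_le1 /=; have := bR; lra. Qed.
Lemma eN_true x : occ x n.+1 = true -> eN beta x = b.
Proof. by move=> h; rewrite /eN h; congr expR; rewrite /=; ring. Qed.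

Lemma outA y : inA y -> \sum_(z | z != y) r y z <= K.
Proof.
move=> /andP[h0 /negPf h1]; apply: le_trans (sum_rate _ _) _.
by have := e0_true _ h0; have := eN_false _ h1; rewrite /K; lra.
Qed.

Lemma one_hop x y : x != y -> inA y -> 1 <= r x y -> rho x <= K ^+ 2 * rho y.
Proof.
move=> xy hy h1; have i1 := inflowB xy (outA _ hy).
have hx0 := rho_ge0 x; have hy0 := rho_ge0 y; have hK := K_ge1.
have e1 : rho x <= rho x * r x y by rewrite -{1}(mulr1 (rho x)); apply: ler_wpM2l.
have e2 : rho y * K <= K ^+ 2 * rho y.
  have h3 : 0 <= (K - 1) * (K * rho y) by apply: mulr_ge0; [lra | apply: mulr_ge0 => //; lra].
  rewrite expr2; nra.
lra.
Qed.

Lemma two_hop x x' y (g : R) : x != x' -> x' != y -> inA y -> 1 <= g ->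
  1 <= r x x' -> \sum_(z | z != x') r x' z <= K * g -> g <= r x' y ->
  rho x <= K ^+ 2 * rho y.
Proof.
move=> xx' x'y hy hg h1 hout h2.
have i1 := inflowB xx' hout; have i2 := inflowB x'y (outA _ hy).
have := rho_ge0 x; have := rho_ge0 x'; have := rho_ge0 y; have := K_ge1.
move=> hK hy0 hx'0 hx0.
have e1 : rho x <= rho x' * (K * g) by nra.
have e2 : rho x' * g <= rho y * K by nra.
rewrite expr2; nra.
Qed.

Lemma swap_same x i j : (i < N)%N -> (j < N)%N -> occ x i = occ x j -> swap x i j = x.
Proof.
move=> hi hj e; apply: config_eq => k hk; rewrite occ_swap //.
case: (eqVneq k i) => [->|ki]; first by rewrite e.
by case: (eqVneq k j) => [->|kj].
Qed.

Lemma le_Ksq u : 0 <= u -> u <= K ^+ 2 * u.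
Proof.
move=> hu; have hK := K_ge1.
have h : 0 <= (K * K - 1) * u by apply: mulr_ge0 => //; nra.
rewrite expr2; nra.
Qed.

Lemma move_bound x y : move x y -> rho x <= K ^+ 2 * rho y.
Proof.
have hK := K_ge1; have hx0 := rho_ge0 x.
case=> hx [[i /andP[i0 iN] ->]| [h1 h2 ->] | [h1 h2 ->]].
- have hy : inA (swap x i i.+1) by apply: (@move_inA n x); split => //; apply: Or31; exists i => //; rewrite i0 iN.
  case: (eqVneq (occ x i) (occ x i.+1)) => [e|ne].
    by rewrite swap_same //; try lia; apply: le_Ksq.
  apply: one_hop => //; last by apply: rate_swap => //; lia.
  apply/eqP => E; have := congr1 (fun u => occ u i) E; rewrite /= occ_swap; try lia.
  by rewrite eqxx => E'; move: ne; rewrite {1}E' eqxx.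
- set x' := swap x 0 1.
  have hy : inA (flip x' 0) by apply: (@move_inA n x); split => //; apply: Or32.
  move: (hx) => /andP[hx0' /negPf hxN].
  have o0 : occ x' 0 = false by rewrite /x' occ_swap.
  have oN : occ x' n.+1 = false.
    rewrite /x' occ_swap //; try lia.
    have -> : (n.+1 == 1)%N = false by apply/eqP; lia.
    by [].
  apply: (@two_hop x x' (flip x' 0) a) => //.
  - by apply/eqP => E; move: o0; rewrite -E hx0'.
  - by rewrite flip_neq.
  - exact: a_ge1.
  - by apply: rate_swap => //; rewrite hx0' h1.
  - apply: le_trans (sum_rate _ _) _; rewrite e0_false //.
    have := eN_false _ oN; have := a_ge1; have := ler0n R n.+1; rewrite /K => h3 h4 h5.
    have h6 : 0 <= n.+1%:R * (a - 1) by apply: mulr_ge0; lra.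
    nra.
  - by rewrite -{1}(e0_false _ o0); apply: rate_flip0.
- set x' := swap x n n.+1.
  have hy : inA (flip x' n.+1) by apply: (@move_inA n x); split => //; apply: Or33.
  move: (hx) => /andP[hx0' /negPf hxN].
  have oN : occ x' n.+1 = true.
    rewrite /x' occ_swap //; try lia.
    have -> : (n.+1 == n)%N = false by apply/eqP; lia.
    by rewrite eqxx.
  have o0 : occ x' 0 = true.
    rewrite /x' occ_swap //; try lia.
    have -> : (0 == n)%N = false by apply/eqP; lia.
    by [].
  apply: (@two_hop x x' (flip x' n.+1) b) => //.
  - by apply/eqP => E; move: oN; rewrite -E hxN.
  - by rewrite flip_neq.
  - exact: b_ge1.
  - by apply: rate_swap => //; rewrite hxN h1.
  - apply: le_trans (sum_rate _ _) _; rewrite eN_true //.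
    have := e0_true _ o0; have := b_ge1; have := ler0n R n.+1; rewrite /K => h3 h4 h5.
    have h6 : 0 <= n.+1%:R * (b - 1) by apply: mulr_ge0; lra.
    nra.
  - by rewrite -{1}(eN_true _ oN); apply: rate_flipN.
Qed.


Lemma flux (S : pred (config N)) :
  \sum_(y | S y) \sum_(x | ~~ S x) rho x * r x y =
  \sum_(y | S y) \sum_(z | ~~ S z) rho y * r y z.
Proof.
case: hs => _ _ hbal.
have bal : forall y, \sum_x rho x * r x y = \sum_z rho y * r y z.
  move=> y; rewrite (bigD1 y) //= rate_self mulr0 add0r hbal.
  by rewrite [RHS](bigD1 y) //= rate_self mulr0 add0r -mulr_sumr.
have e : \sum_(y | S y) \sum_x rho x * r x y = \sum_(y | S y) \sum_z rho y * r y z.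
  by apply: eq_bigr => y _; apply: bal.
move: e; rewrite (eq_bigr (fun y => \sum_(x | S x) rho x * r x y + \sum_(x | ~~ S x) rho x * r x y)); last first.
  by move=> y _; rewrite (bigID S) /=.
rewrite [X in _ = X -> _](eq_bigr (fun y => \sum_(z | S z) rho y * r y z + \sum_(z | ~~ S z) rho y * r y z)); last first.
  by move=> y _; rewrite (bigID S) /=.
rewrite !big_split /= (exchange_big _ _ _ S S) /=.
by move/addrI.
Qed.

End Stat.
Arguments rho_ge0 {beta rho}.
Arguments rho_le1 {beta rho}.
Arguments flux {beta rho}.
Arguments move_bound {beta rho} _ _ {x y}.

Lemma bulk_one x y j : (j < n.+1)%N ->
  (forall i : 'I_n.+1, val i != j -> bterm x y i = 0) ->
  \sum_(i < n.+1) bterm x y i = bterm x y j.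
Proof.
move=> hj H; rewrite (bigD1 (Ordinal hj)) //= big1 ?addr0 //.
Qed.

Lemma ind_ge0 (b : bool) : (0 : R) <= (if b then 1 else 0).
Proof. by case: b. Qed.

Lemma sum_le_full (P : pred (config N)) (f : config N -> R) :
  (forall z, 0 <= f z) -> \sum_(z | P z) f z <= \sum_z f z.
Proof.
move=> h; rewrite [X in _ <= X](bigID P) /= lerDl.
by apply: sumr_ge0 => z _; apply: h.
Qed.

Section Stat2.
Variables (beta : R) (rho : config N -> R).
Hypothesis hs : stationary muL muR beta rho.
Hypothesis hb : 0 <= beta.
Local Notation r := (rate muL muR beta).
Let a := expR (beta * muL / 2).
Let b := expR (- (beta * muR / 2)).

Lemma in0_bound x : occ x 0 = true -> \sum_(y | ~~ occ y 0) r x y <= 2.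
Proof.
move=> hx0.
apply: le_trans (_ : \sum_(y | ~~ occ y 0) ((if y == swap x 0 1 then 1 else 0) +
   (if y == flip x 0 then 1 else 0)) <= _).
  apply: ler_sum => y hy; rewrite rateE (@bulk_one x y 0%N) //; last first.
    move=> i ne; rewrite /bterm; case: ifP => // /andP[_ /eqP E]; move: hy.
    have hi := ltn_ord i.
    rewrite E occ_swap; try lia.
    rewrite eq_sym (negPf ne).
    by rewrite hx0.
  have -> : (y == flip x n.+1) = false.
    by apply/eqP => E; move: hy; rewrite E occ_flip_o // hx0.
  rewrite addr0; apply: lerD.
    by rewrite /bterm; case: (_ != _); case: (_ == _).
  by case: (_ == _) => //; apply: e0_true.
apply: le_trans (sum_le_full _ _ (fun z => addr_ge0 (ind_ge0 _) (ind_ge0 _))) _.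
by rewrite big_split /= !sum_ind.
Qed.

Lemma inN_bound x : occ x n.+1 = false -> \sum_(y | occ y n.+1) r x y <= 2.
Proof.
move=> hxN.
apply: le_trans (_ : \sum_(y | occ y n.+1) ((if y == swap x n n.+1 then 1 else 0) +
   (if y == flip x n.+1 then 1 else 0)) <= _).
  apply: ler_sum => y hy; rewrite rateE (@bulk_one x y n) //; last first.
    move=> i ne; rewrite /bterm; case: ifP => // /andP[_ /eqP E]; move: hy.
    have hi := ltn_ord i.
    rewrite E occ_swap; try lia.
    have -> : (n.+1 == i)%N = false by apply/eqP; lia.
    rewrite eqSS eq_sym (negPf ne).
    by rewrite hxN.
  have -> : (y == flip x 0) = false.
    by apply/eqP => E; move: hy; rewrite E occ_flip_o // hxN.
  rewrite addr0; apply: lerD.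
    by rewrite /bterm; case: (_ != _); case: (_ == _).
  by case: (_ == _) => //; apply: eN_false.
apply: le_trans (sum_le_full _ _ (fun z => addr_ge0 (ind_ge0 _) (ind_ge0 _))) _.
by rewrite big_split /= !sum_ind.
Qed.


Lemma bound_S (S : pred (config N)) (g : R) :
  (forall x, ~~ S x -> \sum_(y | S y) r x y <= 2) ->
  (forall y, S y -> g <= \sum_(z | ~~ S z) r y z) ->
  g * \sum_(y | S y) rho y <= 2.
Proof.
move=> hin hout; have F := flux hs S; have r0 := rho_ge0 hs.
have hsum : \sum_x rho x = 1 by case: hs.
have L : \sum_(y | S y) \sum_(x | ~~ S x) rho x * r x y <= 2.
  rewrite exchange_big /=.
  apply: le_trans (_ : \sum_(x | ~~ S x) rho x * 2 <= _).
    apply: ler_sum => x hx; rewrite -mulr_sumr; apply: ler_wpM2l.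
      exact: r0.
    exact: hin.
  rewrite -mulr_suml; apply: le_trans (_ : (\sum_x rho x) * 2 <= _).
    by apply: ler_wpM2r => //; apply: sum_le_full; exact: r0.
  by rewrite hsum mul1r.
have Rr : \sum_(y | S y) rho y * g <= \sum_(y | S y) \sum_(z | ~~ S z) rho y * r y z.
  apply: ler_sum => y hy; rewrite -mulr_sumr; apply: ler_wpM2l.
    exact: r0.
  exact: hout.
rewrite mulr_sumr; under eq_bigr do rewrite mulrC.
by apply: le_trans Rr _; rewrite -F.
Qed.

Lemma bound_S0 : a * \sum_(y | ~~ occ y 0) rho y <= 2.
Proof.
apply: bound_S => [x|y hy]; first by rewrite negbK; apply: in0_bound.
rewrite (bigD1 (flip y 0)) /=; last by rewrite negbK occ_flip_s // hy.
apply: le_trans (_ : r y (flip y 0) <= _).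
  rewrite /a -(e0_false _ _ (negbTE hy)); exact: rate_flip0.
by rewrite lerDl; apply: sumr_ge0 => z _; apply: rate_ge0.
Qed.

Lemma bound_SN : b * \sum_(y | occ y n.+1) rho y <= 2.
Proof.
apply: bound_S => [x /negbTE hx|y hy]; first by apply: inN_bound.
rewrite (bigD1 (flip y n.+1)) /=; last by rewrite occ_flip_s // hy.
apply: le_trans (_ : r y (flip y n.+1) <= _).
  rewrite /b -(eN_true _ _ hy); exact: rate_flipN.
by rewrite lerDl; apply: sumr_ge0 => z _; apply: rate_ge0.
Qed.

Lemma massA : 8 <= a -> 8 <= b -> 1 / 2 <= \sum_(y | inA y) rho y.
Proof.
move=> ha hb'.
have s0 := bound_S0; have sN := bound_SN; have r0 := rho_ge0 hs.
have g0 : 0 <= \sum_(y | ~~ occ y 0) rho y by apply: sumr_ge0 => y _; exact: r0.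
have gN : 0 <= \sum_(y | occ y n.+1) rho y by apply: sumr_ge0 => y _; exact: r0.
have hsum : \sum_x rho x = 1 by case: hs.
have split : \sum_x rho x = \sum_(y | inA y) rho y + \sum_(y | ~~ inA y) rho y.
  by rewrite (bigID inA).
have cov : \sum_(y | ~~ inA y) rho y <=
    \sum_(y | ~~ occ y 0) rho y + \sum_(y | occ y n.+1) rho y.
  rewrite [X in X <= _]big_mkcond [X in _ <= X + _]big_mkcond [X in _ <= _ + X]big_mkcond -big_split /=.
  apply: ler_sum => y _; have := rho_ge0 hs y.
  by rewrite /inA; case: (occ y 0); case: (occ y n.+1) => /=; lra.
nra.
Qed.
End Stat2.



Arguments massA {beta rho}.
Arguments bound_S0 {beta rho}.
Arguments bound_SN {beta rho}.

Let K2 : R := (n.+1%:R + 2) ^+ 2.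

Lemma K2_ge0 : 0 <= K2.
Proof. by rewrite /K2 exprn_ge0 // addr_ge0 // ler0n. Qed.

Lemma reach_bound x y : reach x y -> exists k : nat, forall beta rho,
  stationary muL muR beta rho -> 0 <= beta -> rho x <= K2 ^+ k * rho y.
Proof.
elim => [z | x0 y0 z0 m _ [k IH]].
  by exists 0%N => beta rho _ _; rewrite expr0 mul1r.
exists k.+1 => beta rho hs hb.
have h1 : rho x0 <= K2 * rho y0 by apply: (move_bound hs hb m).
apply: le_trans h1 _.
rewrite [K2 ^+ k.+1]exprS -mulrA; apply: ler_wpM2l; first exact: K2_ge0.
exact: (IH _ _ hs hb).
Qed.

Definition beta0 : R := 14 / muL - 14 / muR.

Lemma beta0_ge0 : 0 <= beta0.
Proof.
rewrite /beta0; have h1 : 0 <= 14 / muL by apply: divr_ge0 => //; exact: ltW.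
have h2 : 14 / muR <= 0 by apply: mulr_ge0_le0 => //; rewrite invr_le0; exact: ltW.
lra.
Qed.

Lemma big_ab beta : beta0 <= beta ->
  8 <= expR (beta * muL / 2) /\ 8 <= expR (- (beta * muR / 2)).
Proof.
move=> hb.
have h1 : 0 <= 14 / muL by apply: divr_ge0 => //; exact: ltW.
have h2 : 0 <= - (14 / muR).
  by rewrite oppr_ge0; apply: mulr_ge0_le0 => //; rewrite invr_le0; exact: ltW.
have e1 : 14 / muL <= beta by move: hb; rewrite /beta0; lra.
have e2 : - (14 / muR) <= beta by move: hb; rewrite /beta0; lra.
rewrite ler_pdivrMr // in e1.
have e2' : 14 <= beta * (- muR).
  by rewrite -ler_pdivrMr ?oppr_gt0 // invrN mulrN.
split; apply: le_trans _ (expR_ge1Dx _); [lra | ].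
by rewrite mulrN in e2'; lra.
Qed.

Lemma lowerA w : inA w -> exists2 m : R, 0 < m & forall beta rho,
  stationary muL muR beta rho -> beta0 <= beta -> m <= rho w.
Proof.
move=> hw.
have H : forall v : config N, exists k : nat, inA v -> forall beta rho,
    stationary muL muR beta rho -> 0 <= beta -> rho v <= K2 ^+ k * rho zstar.
  move=> v; case hv : (inA v); last by exists 0%N.
  by have [k hk] := reach_bound _ _ (reach_to_zstar hv); exists k.
have [kf hkf] := boolp.choice H.
have [kw hkw] := reach_bound _ _ (reach_from_zstar hw).
set C := \sum_(v | inA v) K2 ^+ kf v.
have C0 : 0 <= C by apply: sumr_ge0 => v _; apply: exprn_ge0; exact: K2_ge0.
set D := C * K2 ^+ kw.
have D0 : 0 <= D by apply: mulr_ge0 => //; apply: exprn_ge0; exact: K2_ge0.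
exists (1 / (2 * (D + 1))).
  by apply: divr_gt0 => //; apply: mulr_gt0 => //; lra.
move=> beta rho hs hb.
have hb0 : 0 <= beta by apply: le_trans beta0_ge0 hb.
have [ha hbb] := big_ab _ hb.
have mA := massA hs hb0 ha hbb.
have e1 : \sum_(v | inA v) rho v <= C * rho zstar.
  rewrite /C mulr_suml; apply: ler_sum => v hv; exact: (hkf v hv _ _ hs hb0).
have e2 := hkw _ _ hs hb0.
have r0 := rho_ge0 hs w; have rz := rho_ge0 hs zstar.
have e3 : C * rho zstar <= D * rho w.
  by rewrite /D -mulrA; apply: ler_wpM2l.
rewrite ler_pdivrMr; last by apply: mulr_gt0 => //; lra.
nra.
Qed.


Lemma pos_flip beta rho (hs : stationary muL muR beta rho) w i :
  (i = 0%N \/ i = n.+1) -> 0 < rho w -> 0 < rho (flip w i).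
Proof.
move=> hi hw; set y := flip w i.
have hiN : (i < N)%N by case: hi => ->.
have ne : w != y by rewrite /y flip_neq.
have H := @inflow beta rho hs w y ne.
have hr : 0 < rate muL muR beta w y.
  case: hi => hi; rewrite /y hi.
    by apply: lt_le_trans (rate_flip0 _ _); apply: expR_gt0.
  by apply: lt_le_trans (rate_flipN _ _); apply: expR_gt0.
rewrite lt_def (rho_ge0 hs y) andbT; apply/eqP => E.
move: H; rewrite E mul0r => H.
have : 0 < rho w * rate muL muR beta w y by apply: mulr_gt0.
by rewrite ltNge H.
Qed.

Lemma not_asymp (f : R -> R) (k : R) : 0 < k ->
  (forall beta, beta0 <= beta -> 0 < f beta /\ expR (beta * k) * f beta <= 2) ->
  ~ asymp1 f.
Proof.
move=> k0 hf /cvgrPdist_le /(_ (k / 4)) H.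
have k4 : 0 < k / 4 by apply: divr_gt0.
have ln2 : 0 < ln (2 : R) by apply: ln_gt0; lra.
have [beta hM hb] := pinfty_ex_ge (num_real (beta0 + 1 + 4 * ln 2 / k)) (H k4).
have b0 := beta0_ge0.
have h4 : 0 <= 4 * ln (2:R) / k by apply: divr_ge0; lra.
have hb0 : beta0 <= beta by lra.
have bpos : 0 < beta by lra.
have [fp fb] := hf beta hb0.
have e1 : ln (f beta) + beta * k <= ln 2.
  rewrite -[X in _ + X](expRK (beta * k)) -lnM ?posrE ?expR_gt0 //.
  rewrite ler_ln ?posrE ?mulr_gt0 ?expR_gt0 //; first by rewrite mulrC.
have e2 : 4 * ln 2 <= beta * k.
  have : 4 * ln (2:R) / k <= beta by lra.
  by rewrite ler_pdivrMr.
move: hb; rewrite sub0r normrN ler_norml => /andP[h1 _].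
rewrite ler_pdivlMr // in h1.
have : - (k / 4) * beta = - (beta * k) / 4 by rewrite mulrC; field.
lra.
Qed.


Lemma le_sum_one beta rho (hs : stationary muL muR beta rho) (P : pred (config N)) x :
  P x -> rho x <= \sum_(y | P y) rho y.
Proof.
move=> hx; rewrite (bigD1 x) //= lerDl.
by apply: sumr_ge0 => y _; apply: (rho_ge0 hs).
Qed.

Lemma pos_nonA x beta rho : stationary muL muR beta rho -> beta0 <= beta ->
  ~~ inA x -> 0 < rho x.
Proof.
move=> hs hb hx.
have key : forall w, inA w -> 0 < rho w.
  move=> w hw; have [m m0 hm] := lowerA w hw.
  by apply: lt_le_trans m0 (hm _ _ hs hb).
have h0N : (0 < N)%N by [].
have hNN : (n.+1 < N)%N by [].
move: hx; rewrite /inA; case h0: (occ x 0); case hN: (occ x n.+1) => //= _.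
- rewrite -(@flipK n x n.+1 hNN); apply: (pos_flip _ _ hs); first by right.
  by apply: key; rewrite /inA occ_flip_o // h0 occ_flip_s // hN.
- rewrite -(@flipK n x 0 h0N) -(@flipK n (flip x 0) n.+1 hNN).
  apply: (pos_flip _ _ hs); first by left.
  apply: (pos_flip _ _ hs); first by right.
  apply: key; rewrite /inA occ_flip_o // occ_flip_s // occ_flip_s // h0 /=.
  by rewrite occ_flip_o // hN.
- rewrite -(@flipK n x 0 h0N); apply: (pos_flip _ _ hs); first by left.
  by apply: key; rewrite /inA occ_flip_s // h0 occ_flip_o // hN.
Qed.

Lemma main (rhoF : R -> config N -> R)
  (hrho : forall beta, stationary muL muR beta (rhoF beta)) x :
  asymp1 (fun beta => rhoF beta x) <-> inA x.
Proof.
split.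
  move=> hA; case hx : (inA x) => //; exfalso.
  move/negbT: hx => hx.
  have hpos := fun beta hb => pos_nonA _ _ _ (hrho beta) hb hx.
  move: (hx); rewrite /inA negb_and negbK => /orP[h0|hN].
    refine (not_asymp _ (muL / 2) _ _ hA); first by apply: divr_gt0.
    move=> beta hb; split; first exact: hpos.
    have hb0 : 0 <= beta by apply: le_trans beta0_ge0 hb.
    have := bound_S0 (hrho beta) hb0.
    have := le_sum_one _ _ (hrho beta) (fun y => ~~ occ y 0) x h0.
    rewrite mulrA => h1 h2; apply: le_trans h2.
    by apply: ler_wpM2l => //; apply: expR_ge0.
  refine (not_asymp _ (- muR / 2) _ _ hA); first by rewrite divr_gt0 // oppr_gt0.
  move=> beta hb; split; first exact: hpos.
  have hb0 : 0 <= beta by apply: le_trans beta0_ge0 hb.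
  have := bound_SN (hrho beta) hb0.
  have := le_sum_one _ _ (hrho beta) (fun y => occ y n.+1) x hN.
  have -> : beta * (- muR / 2) = - (beta * muR / 2) by rewrite mulrA mulrN mulNr.
  move=> h1 h2; apply: le_trans h2.
  by apply: ler_wpM2l => //; apply: expR_ge0.
move=> hx; have [m m0 hm] := lowerA x hx.
have m1 : m <= 1.
  by apply: le_trans (hm _ _ (hrho beta0) (lexx _)) _; apply: (rho_le1 (hrho beta0)).
have L0 : 0 <= - ln m by rewrite oppr_ge0; apply: ln_le0.
apply/cvgrPdist_le => e e0.
apply: filterS (nbhs_pinfty_ge (num_real (beta0 + 1 + (- ln m) / e))).
move=> beta hb /=.
have b0 := beta0_ge0.
have h4 : 0 <= - ln m / e by apply: divr_ge0 => //; exact: ltW.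
have hb0 : beta0 <= beta by lra.
have bpos : 0 < beta by lra.
have r1 := hm _ _ (hrho beta) hb0.
have r2 := rho_le1 (hrho beta) x.
have rpos : 0 < rhoF beta x by apply: lt_le_trans m0 r1.
have l1 : ln (rhoF beta x) <= 0 by apply: ln_le0.
have l2 : ln m <= ln (rhoF beta x) by rewrite ler_ln ?posrE.
have l3 : - ln m <= e * beta.
  have : - ln m / e <= beta by lra.
  by rewrite ler_pdivrMr // mulrC.
rewrite sub0r normrN ler0_norm; last first.
  by rewrite pmulr_lle0 ?invr_gt0.
rewrite -mulNr ler_pdivrMr // mulrC.
lra.
Qed.

End Anal.

Theorem theorem6p1 (R : realType) (N : nat) (muL muR : R)
  (hN : (2 <= N)%N) (hL : 0 < muL) (hR : muR < 0)
  (rho : R -> config N -> R)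
  (hrho : forall beta : R, stationary muL muR beta (rho beta))
  (x : config N) :
  asymp1 (fun beta => rho beta x) <-> (occ x 0 && ~~ occ x N.-1).
Proof.
case: N hN rho hrho x => [|[|n]] // _ rho hrho x.
exact: (@main R n muL muR hL hR rho hrho x).
Qed.
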